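(* Let $(R,\mathfrak{m})$ be a commutative Artinian local ring with identity, $\mathfrak{m}\neq0$ and $\mathfrak{m}^2=0$, and let $n\ge7$ be an integer. If $n$ is odd, then $\{3,4,5,\dots,n-4\}\cup\{n-2,n\}\subseteq L(x^n)$. If $n$ is even, then $\{2,3,4,5,\dots,n-4\}\cup\{n-2,n\}\subseteq L(x^n)$.
   Context: A nonunit polynomial in $R[x]$ is irreducible if in any factorization into two polynomials one factor is a unit of $R[x]$. A positive integer $k$ is a length of $f$ if $f$ is a product of $k$ irreducible polynomials of $R[x]$; $L(f)$ denotes the set of lengths of $f$. *)

(* Defs.v *)
From HB Require Import structures.
From mathcomp Require Import all_boot all_order all_algebra.
Set Implicit Arguments. Unset Strict Implicit. Unset Printing Implicit Defensive.
Import GRing.Theory.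
Local Open Scope ring_scope.

Definition is_ideal (R : comNzRingType) (I : R -> Prop) : Prop :=
  [/\ I 0, (forall a b, I a -> I b -> I (a + b)) & (forall r a, I a -> I (r * a))].

Definition artinian (R : comNzRingType) : Prop :=
  forall I : nat -> R -> Prop,
    (forall k, is_ideal (I k)) ->
    (forall k x, I k.+1 x -> I k x) ->
    exists N, forall k, (N <= k)%N -> forall x, I k x <-> I N x.

(* Local ring: the non-units form an ideal (which is then the unique maximal
   ideal m). *)
Definition local_ring (R : comUnitRingType) : Prop :=
  is_ideal (fun x : R => x \notin GRing.unit).

Definition poly_is_unit (R : comNzRingType) (f : {poly R}) : Prop :=
  exists g : {poly R}, f * g = 1.

Definition poly_irreducible (R : comNzRingType) (f : {poly R}) : Prop :=
  ~ poly_is_unit f /\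
  forall g h : {poly R}, f = g * h -> poly_is_unit g \/ poly_is_unit h.

Definition is_length (R : comNzRingType) (f : {poly R}) (k : nat) : Prop :=
  (0 < k)%N /\
  exists s : seq {poly R},
    [/\ size s = k, (forall g, g \in s -> poly_irreducible g) &
        f = \prod_(g <- s) g].

(* Main.v *)
Require Import Defs.
From HB Require Import structures.
From mathcomp Require Import all_boot all_order all_algebra.
From mathcomp Require Import ring zify.
From Stdlib Require Import Classical.
Import GRing.Theory.
Local Open Scope ring_scope.

Lemma unit_add (R : comUnitRingType) (u n : R) : local_ring R ->
  u \is a GRing.unit -> n \notin GRing.unit -> u + n \is a GRing.unit.
Proof.
move=> [N0 ND NM] Hu Hn; apply: contraT => H.
have := ND _ _ H (NM (-1) n Hn); rewrite mulN1r addrK => /negP; by rewrite Hu.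
Qed.

Lemma sumN (R : comUnitRingType) (I : Type) (r : seq I) (P : pred I) (F : I -> R) :
  local_ring R -> (forall i, P i -> F i \notin GRing.unit) ->
  \sum_(i <- r | P i) F i \notin GRing.unit.
Proof.
move=> [N0 ND NM] H; apply: (big_ind (fun x => x \notin GRing.unit)) => //.
Qed.

Lemma mulN_l (R : comUnitRingType) (a b : R) : local_ring R ->
  a \notin GRing.unit -> a * b \notin GRing.unit.
Proof. by move=> [N0 ND NM] Ha; rewrite mulrC; apply: NM. Qed.

Lemma coef_unit (R : comUnitRingType) (g h : {poly R}) i j : local_ring R ->
  g`_i \is a GRing.unit -> h`_j \is a GRing.unit ->
  (forall s, (s <= i + j)%N -> s != i ->
      g`_s \notin GRing.unit \/ h`_(i + j - s) \notin GRing.unit) ->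
  (g * h)`_(i + j) \is a GRing.unit.
Proof.
move=> L Hg Hh H.
have Hi : (i < (i + j).+1)%N by lia.
rewrite coefM (bigD1 (Ordinal Hi)) //= addKn.
apply: unit_add => //; first by rewrite unitrM Hg Hh.
apply: sumN => // s Hs.
have Hs' : (nat_of_ord s != i) by apply: contra Hs => /eqP E; apply/eqP/val_inj.
have Hsl : (s <= i + j)%N by have := ltn_ord s; lia.
case: (H s Hsl Hs') => N1; first exact: mulN_l.
by rewrite mulrC; apply: mulN_l.
Qed.

Lemma allN_mul (R : comUnitRingType) (g h : {poly R}) : local_ring R ->
  (forall s, g`_s \notin GRing.unit) -> forall s, (g * h)`_s \notin GRing.unit.
Proof.
move=> L H s; rewrite coefM; apply: sumN => // t _; exact: mulN_l.
Qed.

Lemma unit_crit (R : comUnitRingType) (g : {poly R}) : local_ring R ->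
  (forall a b : R, a \notin GRing.unit -> b \notin GRing.unit -> a * b = 0) ->
  g`_0 \is a GRing.unit -> (forall s, (0 < s)%N -> g`_s \notin GRing.unit) ->
  poly_is_unit g.
Proof.
move=> L hm H0 Hs.
set c := g`_0; set e := g - c%:P.
have He : forall s, e`_s \notin GRing.unit.
  move=> [|s]; rewrite /e coefB coefC /=.
    rewrite /c subrr; by case: L.
  by rewrite subr0; apply: Hs.
have Hee : e * e = 0.
  apply/polyP => s; rewrite coefM coef0; apply: big1 => t _; exact: hm.
have Hg : g = c%:P + e by rewrite /e addrC subrK.
exists ((c^-1)%:P - (c^-1)%:P * (c^-1)%:P * e).
have HC : c%:P * (c^-1)%:P = 1 by rewrite -polyCM mulrV.
rewrite Hg.
have -> : (c%:P + e) * ((c^-1)%:P - (c^-1)%:P * (c^-1)%:P * e) =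
   c%:P * (c^-1)%:P + (c^-1)%:P * e - (c%:P * (c^-1)%:P) * (c^-1)%:P * e
   - (c^-1)%:P * (c^-1)%:P * (e * e) by ring.
by rewrite HC Hee mul1r mulr0 subr0 addrK.
Qed.

Lemma has_unit_coef (R : comUnitRingType) (g h : {poly R}) k : local_ring R ->
  (g * h)`_k \is a GRing.unit -> exists s, g`_s \is a GRing.unit.
Proof.
move=> L Hk; apply: NNPP => Hn.
have H : forall s, g`_s \notin GRing.unit.
  by move=> s; apply/negP => U; apply: Hn; exists s.
by move: (@allN_mul R g h L H k); rewrite Hk.
Qed.

Lemma unit_coef_bound (R : comUnitRingType) (g : {poly R}) s :
  g`_s \is a GRing.unit -> (s <= size g)%N.
Proof.
move=> U; rewrite leqNgt; apply/negP => Hs.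
by move: U; rewrite nth_default ?unitr0 //; apply: ltnW.
Qed.

Lemma irr_crit (R : comUnitRingType) (f : {poly R}) k : local_ring R ->
  (forall a b : R, a \notin GRing.unit -> b \notin GRing.unit -> a * b = 0) ->
  (0 < k)%N -> f`_k \is a GRing.unit -> (forall s, s != k -> f`_s \notin GRing.unit) ->
  (k == 1)%N || (f`_0 != 0) -> poly_irreducible f.
Proof.
move=> L hm k0 Hk Hs H0; split.
  move=> [g Hfg].
  have [j Hj] : exists s, g`_s \is a GRing.unit.
    by apply: (@has_unit_coef R g f 0%N L); rewrite mulrC Hfg coef1 unitr1.
  have := @coef_unit R f g k j L Hk Hj.
  rewrite Hfg coef1.
  have -> : (k + j == 0)%N = false by lia.
  rewrite unitr0 => HH; have := HH _ => /(_ _) H; exfalso.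
  suff : false by [].
  apply: HH => s _ /Hs; by left.
move=> g h Hf.
have exg : exists s, g`_s \is a GRing.unit.
  by apply: (@has_unit_coef R g h k L); rewrite -Hf.
have exh : exists s, h`_s \is a GRing.unit.
  by apply: (@has_unit_coef R h g k L); rewrite mulrC -Hf.
case: (ex_minnP exg) => i Hi Himin.
case: (ex_minnP exh) => j Hj Hjmin.
case: (ex_maxnP exg (fun s => @unit_coef_bound _ g s)) => i' Hi' Himax.
case: (ex_maxnP exh (fun s => @unit_coef_bound _ h s)) => j' Hj' Hjmax.
have NG : forall s, ~~ (g`_s \is a GRing.unit) = (g`_s \notin GRing.unit) by [].
have E1 : (i + j)%N = k.
  apply/eqP; apply: contraT => Hne.
  have U := @coef_unit R g h i j L Hi Hj.
  have : (g * h)`_(i + j) \is a GRing.unit.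
    apply: U => s Hsl Hsi.
    case: (ltngtP s i) => c.
    - left; apply/negP => U'; have := Himin _ U'; lia.
    - right; apply/negP => U'; have := Hjmin _ U'; lia.
    - by move: Hsi; rewrite c eqxx.
  by rewrite -Hf (negbTE (Hs _ Hne)).
have E2 : (i' + j')%N = k.
  apply/eqP; apply: contraT => Hne.
  have U := @coef_unit R g h i' j' L Hi' Hj'.
  have : (g * h)`_(i' + j') \is a GRing.unit.
    apply: U => s Hsl Hsi.
    case: (ltngtP s i') => c.
    - right; apply/negP => U'; have := Hjmax _ U'; lia.
    - left; apply/negP => U'; have := Himax _ U'; lia.
    - by move: Hsi; rewrite c eqxx.
  by rewrite -Hf (negbTE (Hs _ Hne)).
have Ii : i' = i by have := Himax _ Hi; have := Himin _ Hi'; have := Hjmax _ Hj; have := Hjmin _ Hj'; lia.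
have Jj : j' = j by have := Himax _ Hi; have := Himin _ Hi'; have := Hjmax _ Hj; have := Hjmin _ Hj'; lia.
case: (posnP i) => [i0|ip].
  left; apply: unit_crit => //; first by move: Hi; rewrite i0.
  move=> s s0; apply/negP => U'; have := Himax _ U'; lia.
case: (posnP j) => [j0|jp].
  right; apply: unit_crit => //; first by move: Hj; rewrite j0.
  move=> s s0; apply/negP => U'; have := Hjmax _ U'; lia.
exfalso; case/orP: H0 => [/eqP k1|H0]; first lia.
move/eqP: H0; apply.
rewrite Hf coef0M; apply: hm.
  apply/negP => U'; have := Himin _ U'; lia.
apply/negP => U'; have := Hjmin _ U'; lia.
Qed.

Lemma irr_X (R : comUnitRingType) : local_ring R ->
  (forall a b : R, a \notin GRing.unit -> b \notin GRing.unit -> a * b = 0) ->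
  poly_irreducible ('X : {poly R}).
Proof.
move=> L hm; apply: (@irr_crit R _ 1%N) => //.
- by rewrite coefX eqxx unitr1.
- by move=> s Hs; rewrite coefX (negbTE Hs) /= unitr0.
Qed.

Lemma irr_special (R : comUnitRingType) (a : R) (p : {poly R}) k : local_ring R ->
  (forall a b : R, a \notin GRing.unit -> b \notin GRing.unit -> a * b = 0) ->
  a \notin GRing.unit -> (0 < k)%N -> a * p`_0 != 0 ->
  poly_irreducible ('X^k + a%:P * p).
Proof.
move=> L hm Ha k0 H0; apply: (@irr_crit R _ k) => //.
- by rewrite coefD coefXn eqxx coefCM; apply: unit_add => //; [rewrite unitr1|apply: mulN_l].
- move=> s Hs; rewrite coefD coefXn (negbTE Hs) add0r coefCM; exact: mulN_l.
- apply/orP; right; rewrite coefD coefXn coefCM.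
  have -> : (0 == k)%N = false by lia.
  by rewrite add0r.
Qed.

Lemma iterX (R : comUnitRingType) m : iter m ( *%R ('X : {poly R})) 1 = 'X^m.
Proof. by elim: m => [|m IH] //=; rewrite IH exprS. Qed.

Lemma trip_id (S : comNzRingType) (A Y X2 : S) : A * A = 0 ->
  (X2 + A * 1) * ((Y * X2 + A * 1) * ((Y * X2 + A * (-1 - Y)) * 1)) = Y * Y * X2 * X2 * X2.
Proof.
move=> H.
have -> : (X2 + A * 1) * ((Y * X2 + A * 1) * ((Y * X2 + A * (-1 - Y)) * 1)) =
  Y * Y * X2 * X2 * X2 + A * A * (- (1 + Y) * X2 - Y * X2 * Y - A * (1 + Y)) by ring.
by rewrite H mul0r addr0.
Qed.

Lemma len_pair (R : comUnitRingType) (a : R) n k l : local_ring R ->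
  (forall a b : R, a \notin GRing.unit -> b \notin GRing.unit -> a * b = 0) ->
  a \notin GRing.unit -> a != 0 ->
  (0 < k)%N -> (2 * k <= n)%N -> l = (n - 2 * k + 2)%N -> is_length ('X^n : {poly R}) l.
Proof.
move=> L hm Ha a0 k0 kn ->; split; first lia.
exists (nseq (n - 2 * k) 'X ++ [:: 'X^k + a%:P * 1; 'X^k + a%:P * (-1)]); split.
- by rewrite size_cat size_nseq /=; lia.
- move=> g; rewrite mem_cat mem_nseq !inE => /orP [/andP[_ /eqP->] | /orP[/eqP->|/eqP->]].
  + exact: irr_X.
  + by apply: irr_special => //; rewrite coef1 /= mulr1.
  + by apply: irr_special => //; rewrite coefN coef1 /= mulrN1 oppr_eq0.
- rewrite big_cat big_nseq iterX /= !big_cons big_nil.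
  have -> : ('X^k + a%:P * 1) * (('X^k + a%:P * (-1)) * 1) = 'X^k * 'X^k - a%:P * a%:P :> {poly R}
    by ring.
  rewrite -polyCM hm // subr0 -!exprD; congr (_ ^+ _); lia.
Qed.

Lemma len_triple (R : comUnitRingType) (a : R) n k l : local_ring R ->
  (forall a b : R, a \notin GRing.unit -> b \notin GRing.unit -> a * b = 0) ->
  a \notin GRing.unit -> a != 0 ->
  (3 <= k)%N -> (2 * k + 2 <= n)%N -> l = (n - 2 * k + 1)%N -> is_length ('X^n : {poly R}) l.
Proof.
move=> L hm Ha a0 k0 kn ->; split; first lia.
exists (nseq (n - 2 * k - 2) 'X ++ [:: 'X^2 + a%:P * 1; 'X^k + a%:P * 1;
           'X^k + a%:P * (-1 - 'X^(k - 2))]); split.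
- by rewrite size_cat size_nseq /=; lia.
- move=> g; rewrite mem_cat mem_nseq !inE
    => /orP [/andP[_ /eqP->] | /orP[/eqP->|/orP[/eqP->|/eqP->]]].
  + exact: irr_X.
  + by apply: irr_special => //; rewrite coef1 /= mulr1.
  + by apply: irr_special => //; [lia | rewrite coef1 /= mulr1].
  + apply: irr_special => //; first lia.
    rewrite coefB coefN coef1 coefXn.
    have -> : (0 == k - 2)%N = false by lia.
    by rewrite /= subr0 mulrN1 oppr_eq0.
- rewrite big_cat big_nseq iterX /= !big_cons big_nil.
  have Ek : 'X^k = 'X^(k - 2) * 'X^2 :> {poly R} by rewrite -exprD subnK //; lia.
  rewrite Ek trip_id; last by rewrite -polyCM hm.
  rewrite -!exprD; congr (_ ^+ _); lia.
Qed.

Lemma len_gen (R : comUnitRingType) (a : R) n l : local_ring R ->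
  (forall a b : R, a \notin GRing.unit -> b \notin GRing.unit -> a * b = 0) ->
  a \notin GRing.unit -> a != 0 ->
  (2 <= l)%N -> (l + 4 <= n)%N -> (3 <= l)%N || ~~ odd (n - l) ->
  is_length ('X^n : {poly R}) l.
Proof.
move=> L hm Ha a0 l2 ln H.
have := odd_double_half (n - l); rewrite -muln2.
case E: (odd (n - l)) => /= Hm.
  have l3 : (3 <= l)%N by move: H; rewrite E orbF.
  apply: (@len_triple R a n ((n - l)./2).+1) => //; lia.
apply: (@len_pair R a n ((n - l)./2).+1) => //; lia.
Qed.

Theorem lemma4p13 (R : comUnitRingType) (n : nat) :
  artinian R -> local_ring R ->
  (exists a : R, a \notin GRing.unit /\ a != 0) ->
  (forall a b : R, a \notin GRing.unit -> b \notin GRing.unit -> a * b = 0) ->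
  (7 <= n)%N ->
  (odd n ->
     (forall k, (3 <= k <= n - 4)%N -> is_length ('X^n : {poly R}) k) /\
     is_length ('X^n : {poly R}) (n - 2) /\ is_length ('X^n : {poly R}) n) /\
  (~~ odd n ->
     (forall k, (2 <= k <= n - 4)%N -> is_length ('X^n : {poly R}) k) /\
     is_length ('X^n : {poly R}) (n - 2) /\ is_length ('X^n : {poly R}) n).
Proof.
move=> _ L [a [Ha a0]] hm n7.
have P2 : is_length ('X^n : {poly R}) (n - 2) by apply: (@len_pair R a n 2) => //; lia.
have Pn : is_length ('X^n : {poly R}) n by apply: (@len_pair R a n 1) => //; lia.
split => Hn; (split; last by split).
  move=> k /andP[k3 kn]; apply: (@len_gen R a) => //; try lia.
move=> k /andP[k2 kn]; apply: (@len_gen R a) => //; try lia.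
Qed.
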